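(* Let $d\geq 10$. There exists no smooth function $g:[0,\infty)\to\mathbb{R}$ solving $$g''(y)+\left(\frac{d-3}{y}-\frac{y}{2}\right)g'(y)-\frac{d-2}{y^2}\,g(y)\,(g(y)-1)\,(g(y)-2)=0\quad\text{for all } y>0$$ and satisfying both of the following conditions: (i) $g(0)=g'(0)=0$ and $g''(0)=a$ for some $a>0$; (ii) $\lim_{y\to\infty}g(y)=b$ for some $b\in\mathbb{R}$, and $\lim_{y\to\infty}y^3g'(y)=-2(d-2)\,b(b-1)(b-2)$.
   Context: The equation is the ordinary differential equation for self-similar shrinking solutions $w(t,r)=g(r/\sqrt{-t})$, $t<0$, of the spherically symmetric Yang–Mills heat flow $w_t=w_{rr}+\frac{d-3}{r}w_r-\frac{d-2}{r^2}w(w-1)(w-2)$ in $d$ dimensions. Here ''smooth'' means $g\in C^\infty([0,\infty))$. *)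

(* Defs.v *)
From Stdlib Require Import Reals Lra.
Open Scope R_scope.

Definition right_deriv_lim (f : R -> R) (x l : R) : Prop :=
  forall eps, 0 < eps -> exists delta, 0 < delta /\
    forall h, 0 < h < delta -> Rabs ((f (x + h) - f x) / h - l) < eps.

(* [smooth_nonneg_derivs g D] : g is C^infinity on [0,oo) and D n is its n-th
   derivative there (one-sided derivative at 0). Values on (-oo,0) are
   irrelevant. *)
Definition smooth_nonneg_derivs (g : R -> R) (D : nat -> R -> R) : Prop :=
  (forall y, 0 <= y -> D O y = g y) /\
  (forall n y, 0 < y -> derivable_pt_lim (D n) y (D (S n) y)) /\
  (forall n, right_deriv_lim (D n) 0 (D (S n) 0)).

Definition lim_at_infty (f : R -> R) (l : R) : Prop :=
  forall eps, 0 < eps -> exists M, forall y, M < y -> Rabs (f y - l) < eps.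

(* Main.v *)
Require Import Defs.
From Stdlib Require Import Reals Lra Lia.
From Coquelicot Require Import Coquelicot.
Open Scope R_scope.

Definition Fb (D : nat -> R -> R) (n : R) (t : R) :=
  (6 - n + t^2/2)*t*D 1%nat t + (n-2)*(D 0%nat t*(D 0%nat t - 1)*(D 0%nat t - 2)).
Definition FF (D : nat -> R -> R) (e : nat) (t : R) :=
  t^(S e) * exp(-(t*t)/4) * D 1%nat t * Fb D (INR e + 4) t.
Definition Fp (D : nat -> R -> R) (e : nat) (t : R) :=
  t^(S e) * exp(-(t*t)/4) * ((3*D 1%nat t + t*D 2%nat t)^2
     + (D 1%nat t)^2*(3*(INR e + 4 - 2)*(D 0%nat t-1)^2 + (INR e + 4) - 10)).

Lemma deriv_F (D : nat -> R -> R) (e : nat) (y : R) : 0 < y ->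
  is_derive (D 1%nat) y (D 2%nat y) -> is_derive (D 0%nat) y (D 1%nat y) ->
  D 2%nat y + ((INR e + 4 - 3)/y - y/2) * D 1%nat y
   - (INR e + 4 - 2)/(y^2) * D 0%nat y * (D 0%nat y - 1) * (D 0%nat y - 2) = 0 ->
  is_derive (FF D e) y (Fp D e y).
Proof.
intros hy h1 h0 hode.
unfold FF, Fp, Fb.
auto_derive.
{ repeat split; eexists; eassumption. }
replace (Derive (fun x => D 1%nat x) y) with (D 2%nat y)
  by (symmetry; apply is_derive_unique; exact h1).
replace (Derive (fun x => D 0%nat x) y) with (D 1%nat y)
  by (symmetry; apply is_derive_unique; exact h0).
change (match e with 0%nat => 1 | S _ => INR e + 1 end) with (INR (S e)).
rewrite S_INR.
assert (hq : D 2%nat y = - ((INR e + 4 - 3)/y - y/2) * D 1%nat y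
   + (INR e + 4 - 2)/(y^2) * D 0%nat y * (D 0%nat y - 1) * (D 0%nat y - 2)) by lra.
rewrite hq. set (E := exp _). set (m := INR e). replace (y^(S e)) with (y*y^e) by (simpl; ring). set (ye := y^e). field. lra.
Qed.

Lemma mono (f df : R -> R) :
  (forall y, 0 < y -> is_derive f y (df y)) -> (forall y, 0 < y -> 0 <= df y) ->
  forall x z, 0 < x -> x <= z -> f x <= f z.
Proof.
intros hd hp x z hx hxz.
destruct (MVT_gen f x z df) as [c [hc eq]].
- intros t ht. apply hd. rewrite Rmin_left in ht by lra. lra.
- intros t ht. rewrite Rmin_left in ht by lra.
  apply derivable_continuous_pt. exists (df t). apply is_derive_Reals. apply hd. lra.
- rewrite Rmin_left in hc by lra. rewrite Rmax_right in hc by lra.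
  assert (0 <= df c) by (apply hp; lra). nra.
Qed.

Lemma Kpos (e : nat) (y : R) : 0 < y -> 0 < y^(S e) * exp(-(y*y)/4).
Proof. intros. apply Rmult_lt_0_compat. apply pow_lt; lra. apply exp_pos. Qed.

Lemma Fp_nonneg D e y : 0 < y -> 6 <= INR e -> 0 <= Fp D e y.
Proof.
intros hy he. unfold Fp. pose proof (Kpos e y hy).
apply Rmult_le_pos; [lra|].
apply Rplus_le_le_0_compat. apply pow2_ge_0.
apply Rmult_le_pos. apply pow2_ge_0.
pose proof (pow2_ge_0 (D 0%nat y - 1)). nra.
Qed.

Lemma Fp_pos D e y : 0 < y -> 6 <= INR e -> D 1%nat y <> 0 -> D 0%nat y <> 1 -> 0 < Fp D e y.
Proof.
intros hy he h1 h0. unfold Fp. pose proof (Kpos e y hy).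
apply Rmult_lt_0_compat; [lra|].
apply Rplus_le_lt_0_compat. apply pow2_ge_0.
apply Rmult_lt_0_compat. apply pow2_gt_0; auto.
assert (0 < (D 0%nat y - 1)^2) by (apply pow2_gt_0; lra). nra.
Qed.

Lemma pow_exp_bound N x : 0 <= x -> x^N <= INR (Factorial.fact N) * exp x.
Proof.
intros hx. pose proof (exp_ge_taylor x N hx) as H.
assert (Hf : 0 < INR (Factorial.fact N)) by (apply lt_0_INR; apply Factorial.lt_O_fact).
assert (x^N / INR (Factorial.fact N) <= exp x).
{ eapply Rle_trans; [|exact H]. destruct N.
  - simpl. lra.
  - rewrite tech5.
    assert (0 <= sum_f_R0 (fun k => x ^ k / INR (Factorial.fact k)) N).
    { apply cond_pos_sum. intros k. apply Rdiv_le_0_compat. apply pow_le; lra.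
      apply lt_0_INR; apply Factorial.lt_O_fact. }
    lra. }
apply (Rmult_le_compat_l (INR (Factorial.fact N))) in H0; [|lra].
replace (x^N) with (INR (Factorial.fact N) * (x^N / INR (Factorial.fact N))) by (field; lra).
exact H0.
Qed.

Lemma decay m eps : 0 < eps -> exists Y, forall y, Y < y -> y^m * exp(-(y*y)/4) < eps.
Proof.
intros he.
set (k := 4^(S m) * INR (Factorial.fact (S m))).
assert (hk : 0 < k).
{ unfold k. apply Rmult_lt_0_compat. apply pow_lt; lra. apply lt_0_INR; apply Factorial.lt_O_fact. }
exists (Rmax 1 (k/eps)). intros y hy.
assert (hy1 : 1 < y) by (eapply Rle_lt_trans; [apply Rmax_l|exact hy]).
assert (hyk : k/eps < y) by (eapply Rle_lt_trans; [apply Rmax_r|exact hy]).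
assert (hyk' : k < eps * y).
{ apply (Rmult_lt_compat_l eps) in hyk; auto. replace (eps * (k/eps)) with k in hyk by (field; lra). lra. }
set (p := y^m).
assert (hp : 1 <= p) by (apply pow_R1_Rle; lra).
pose proof (pow_exp_bound (S m) (y*y/4)) as hb.
set (E := exp (y*y/4)) in *.
assert (hE : 0 < E) by apply exp_pos.
replace (exp (-(y*y)/4)) with (/ E) by (unfold E; rewrite <- exp_Ropp; f_equal; field).
assert (hpow : (y*y/4)^(S m) = (y*p)*(y*p)/4^(S m)).
{ unfold Rdiv. rewrite !Rpow_mult_distr. rewrite pow_inv. unfold p. simpl. ring. }
rewrite hpow in hb. specialize (hb ltac:(nra)).
assert (h4 : 0 < 4^(S m)) by (apply pow_lt; lra).
assert (hb' : (y*p)*(y*p) <= k * E).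
{ unfold k. apply (Rmult_le_compat_l (4^(S m))) in hb; [|lra].
  replace (4 ^ S m * (y * p * (y * p) / 4 ^ S m)) with ((y*p)*(y*p)) in hb by (field; lra).
  lra. }
apply (Rmult_lt_reg_l E); auto.
replace (E * (p * / E)) with p by (field; lra).
assert (p * k < eps * E * k) ; [|nra].
assert (p * k < p * (eps * y)) by (apply Rmult_lt_compat_l; lra).
assert (p * (eps * y) <= eps * ((y*p)*(y*p))).
{ assert (1 <= y*p) by nra.
  assert (0 <= eps * (y*p) * (y*p - 1)) by (apply Rmult_le_pos; nra). nra. }
nra.
Qed.

Lemma abs_mul_le u v U V : Rabs u <= U -> Rabs v <= V -> Rabs (u*v) <= U*V.
Proof. intros. rewrite Rabs_mult. apply Rmult_le_compat; auto using Rabs_pos. Qed.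

Lemma abs_add_le u v U V : Rabs u <= U -> Rabs v <= V -> Rabs (u+v) <= U+V.
Proof. intros. eapply Rle_trans. apply Rabs_triang. lra. Qed.

Lemma abs_sub_c G B c : Rabs G <= B -> 0 <= c -> Rabs (G - c) <= B + c.
Proof. intros. unfold Rminus. eapply Rle_trans. apply Rabs_triang.
rewrite Rabs_Ropp, (Rabs_right c) by lra. lra. Qed.

Lemma cube_bound G B : Rabs G <= B -> Rabs (G*(G-1)*(G-2)) <= B*(B+1)*(B+2).
Proof. intros. repeat apply abs_mul_le; auto; apply abs_sub_c; auto; lra. Qed.

Lemma ratio_bounds X h c r : 0 < h -> Rabs (X/h - c) < r -> (c-r)*h < X < (c+r)*h.
Proof.
intros hh H. apply Rabs_def2 in H. destruct H as [H1 H2].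
replace X with ((X/h)*h) by (field; lra). split; nra.
Qed.


Lemma K_small e y : 0 < y < 1 -> Rabs (y^(S e) * exp(-(y*y)/4)) <= y.
Proof.
intros hy. rewrite Rabs_right.
2:{ apply Rle_ge, Rmult_le_pos. apply pow_le; lra. apply Rlt_le, exp_pos. }
assert (h1 : y^e <= 1) by (rewrite <- (pow1 e); apply pow_incr; lra).
assert (h2 : exp (-(y*y)/4) <= 1) by (rewrite <- exp_0; apply Rlt_le, exp_increasing; nra).
assert (0 <= y^e) by (apply pow_le; lra).
assert (0 < exp (-(y*y)/4)) by apply exp_pos.
set (E := exp (-(y*y)/4)) in *. set (p := y^e) in *.
assert (p * E <= 1) by nra.
replace (y^(S e) * E) with (y * (p * E)) by (unfold p; simpl; ring). nra.
Qed.
Lemma K_split e y : (2 <= e)%nat -> y^(S e) * exp(-(y*y)/4) = (y^(e-2) * exp(-(y*y)/4)) * y^3.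
Proof.
intros. replace (S e) with ((e-2) + 3)%nat by lia. rewrite pow_add. ring.
Qed.


Theorem theorem2 (d : nat) (hd : (10 <= d)%nat) :
  ~ (exists (g : R -> R) (D : nat -> R -> R),
       smooth_nonneg_derivs g D /\
       (forall y, 0 < y ->
          D 2%nat y + ((INR d - 3) / y - y / 2) * D 1%nat y
          - (INR d - 2) / (y ^ 2) * g y * (g y - 1) * (g y - 2) = 0) /\
       (g 0 = 0 /\ D 1%nat 0 = 0 /\ exists a, 0 < a /\ D 2%nat 0 = a) /\
       (exists b, lim_at_infty g b /\
          lim_at_infty (fun y => y ^ 3 * D 1%nat y)
                       (-2 * (INR d - 2) * b * (b - 1) * (b - 2)))).
Proof.
intros [g [D [[hD0 [hder hright]] [hode [[g0 [d10 [a [ha d20]]]] [b [hb hL]]]]]]].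
set (e := (d - 4)%nat).
assert (hde : d = (e + 4)%nat) by (unfold e; lia).
assert (hn : INR d = INR e + 4) by (rewrite hde, plus_INR; simpl; ring).
assert (he6 : 6 <= INR e).
{ replace 6 with (INR 6) by (simpl; ring). apply le_INR. unfold e; lia. }
set (n := INR e + 4) in *.
assert (hdv : forall k y, 0 < y -> is_derive (D k) y (D (S k) y)).
{ intros k y hy. apply is_derive_Reals. apply hder. exact hy. }
assert (hF : forall y, 0 < y -> is_derive (FF D e) y (Fp D e y)).
{ intros y hy. apply deriv_F; auto. specialize (hode y hy). rewrite hn in hode.
  rewrite <- (hD0 y) in hode by lra. exact hode. }
assert (hmono : forall x z, 0 < x -> x <= z -> FF D e x <= FF D e z).
{ apply mono with (df := Fp D e). exact hF. intros; apply Fp_nonneg; auto. }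
destruct (hright 1%nat a ha) as [d1 [hd1 H1]].
assert (hD00 : D 0%nat 0 = 0) by (rewrite hD0; [exact g0|lra]).
destruct (hright 0%nat 1 Rlt_0_1) as [d0 [hd0 H0]].
assert (near : forall y, 0 < y < Rmin d1 (Rmin d0 1) ->
   0 < D 1%nat y < 2*a*y /\ Rabs (D 0%nat y) < 1).
{ intros y [hy0 hy1].
  assert (y < d1) by (eapply Rlt_le_trans; [exact hy1|apply Rmin_l]).
  assert (H2 : y < Rmin d0 1) by (eapply Rlt_le_trans; [exact hy1|apply Rmin_r]).
  assert (y < d0) by (eapply Rlt_le_trans; [exact H2|apply Rmin_l]).
  assert (y < 1) by (eapply Rlt_le_trans; [exact H2|apply Rmin_r]).
  specialize (H1 y ltac:(lra)). specialize (H0 y ltac:(lra)).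
  rewrite Rplus_0_l, d10, Rminus_0_r, d20 in H1.
  rewrite Rplus_0_l, d10, hD00, !Rminus_0_r in H0.
  assert (H0' : Rabs (D 0%nat y / y - 0) < 1) by (rewrite Rminus_0_r; exact H0).
  apply ratio_bounds in H1; auto. apply ratio_bounds in H0'; auto.
  split. lra. apply Rabs_def1; nra. }
set (r0 := Rmin d1 (Rmin d0 1)).
assert (hr0 : 0 < r0).
{ unfold r0. repeat apply Rmin_glb_lt; lra. }
assert (hpos : 0 < Fp D e (r0/2)).
{ assert (hr : 0 < r0/2 < r0) by lra.
  destruct (near (r0/2) hr) as [[hp1 hp2] hg].
  apply Fp_pos; try lra. apply Rabs_def2 in hg. lra. }
assert (hsmall : forall eps x, 0 < eps -> 0 < x -> exists y, 0 < y < x /\ Rabs (FF D e y) < eps).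
{ intros eps x heps hx.
  set (c := 2*a*(n*1*(2*a) + n*(1*(1+1)*(1+2)))).
  assert (hc : 0 < c) by (unfold c; unfold n in *; nra).
  set (y := Rmin (Rmin x r0) (eps/c) / 2).
  assert (hm : 0 < Rmin (Rmin x r0) (eps/c)).
  { repeat apply Rmin_glb_lt; try lra. apply Rdiv_lt_0_compat; lra. }
  assert (Rmin (Rmin x r0) (eps/c) <= Rmin x r0) by apply Rmin_l.
  assert (Rmin (Rmin x r0) (eps/c) <= eps/c) by apply Rmin_r.
  assert (hy1 : y < Rmin x r0) by (unfold y; lra).
  assert (hyx : y < x) by (eapply Rlt_le_trans; [exact hy1|apply Rmin_l]).
  assert (hyr : y < r0) by (eapply Rlt_le_trans; [exact hy1|apply Rmin_r]).
  assert (hye : y < eps/c) by (unfold y; lra).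
  assert (hy0 : 0 < y) by (unfold y; lra).
  assert (hr1 : r0 <= 1) by (unfold r0; eapply Rle_trans; [apply Rmin_r|apply Rmin_r]).
  exists y. split; [lra|].
  destruct (near y ltac:(split; [exact hy0| exact hyr])) as [[hp1 hp2] hg].
  unfold FF, Fb. fold n.
  assert (hb1 : Rabs (6 - n + y^2/2) <= n) by (apply Rabs_le; simpl; unfold n in *; nra).
  assert (hb2 : Rabs y <= 1) by (apply Rabs_le; lra).
  assert (hb3 : Rabs (D 1%nat y) <= 2*a) by (apply Rabs_le; nra).
  assert (hb4 : Rabs (n - 2) <= n) by (apply Rabs_le; unfold n in *; lra).
  assert (hb5 := cube_bound (D 0%nat y) 1 ltac:(lra)).
  assert (hFb := abs_add_le _ _ _ _ (abs_mul_le _ _ _ _ (abs_mul_le _ _ _ _ hb1 hb2) hb3)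
                  (abs_mul_le _ _ _ _ hb4 hb5)).
  assert (hK := K_small e y ltac:(lra)).
  assert (hall := abs_mul_le _ _ _ _ (abs_mul_le _ _ _ _ hK hb3) hFb).
  eapply Rle_lt_trans; [exact hall|].
  replace (y * (2*a) * (n * 1 * (2 * a) + n * (1 * (1 + 1) * (1 + 2)))) with (y * c) by (unfold c; ring).
  apply (Rmult_lt_compat_r c) in hye; auto.
  replace (eps / c * c) with eps in hye by (field; lra). exact hye. }
assert (hlarge : forall eps x, 0 < eps -> exists y, x < y /\ Rabs (FF D e y) < eps).
{ intros eps x heps.
  destruct (hb 1 Rlt_0_1) as [Mb HMb].
  destruct (hL 1 Rlt_0_1) as [ML HML].
  set (Lv := -2 * (INR d - 2) * b * (b - 1) * (b - 2)) in *.
  set (C1 := Rabs Lv + 1). set (B1 := Rabs b + 1).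
  assert (hC1 : 0 < C1) by (unfold C1; pose proof (Rabs_pos Lv); lra).
  assert (hB1 : 0 < B1) by (unfold B1; pose proof (Rabs_pos b); lra).
  set (M := (n+1)*C1 + n*(B1*(B1+1)*(B1+2))).
  assert (hM : 0 < M) by (unfold M, n in *; assert (0 < B1*(B1+1)*(B1+2)) by
     (repeat apply Rmult_lt_0_compat; lra); nra).
  set (eps' := eps / (C1*M+1)).
  assert (he' : 0 < eps') by (unfold eps'; apply Rdiv_lt_0_compat; nra).
  destruct (decay (e-2) eps' he') as [Y HY].
  set (y := Rmax (Rmax 1 (Rmax Mb ML)) (Rmax Y x) + 1).
  assert (h1 : 1 < y /\ Mb < y /\ ML < y /\ Y < y /\ x < y).
  { unfold y. pose proof (Rmax_l 1 (Rmax Mb ML)). pose proof (Rmax_r 1 (Rmax Mb ML)).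
    pose proof (Rmax_l Mb ML). pose proof (Rmax_r Mb ML).
    pose proof (Rmax_l Y x). pose proof (Rmax_r Y x).
    pose proof (Rmax_l (Rmax 1 (Rmax Mb ML)) (Rmax Y x)).
    pose proof (Rmax_r (Rmax 1 (Rmax Mb ML)) (Rmax Y x)). lra. }
  destruct h1 as [hy1 [hyb [hyL [hyY hyx]]]].
  exists y. split; [exact hyx|].
  specialize (HMb y hyb). specialize (HML y hyL). specialize (HY y hyY).
  rewrite <- (hD0 y) in HMb by lra.
  assert (hG : Rabs (D 0%nat y) <= B1).
  { unfold B1. replace (D 0%nat y) with ((D 0%nat y - b) + b) by ring.
    eapply Rle_trans. apply Rabs_triang. lra. }
  assert (hP : Rabs (y^3 * D 1%nat y) <= C1).
  { unfold C1. replace (y^3 * D 1%nat y) with ((y^3 * D 1%nat y - Lv) + Lv) by ring.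
    eapply Rle_trans. apply Rabs_triang. lra. }
  set (t := / (y*y)).
  assert (ht : 0 < t <= 1).
  { unfold t. split. apply Rinv_0_lt_compat; nra.
    rewrite <- Rinv_1. apply Rinv_le_contravar; nra. }
  assert (hFbe : Fb D n y = ((6-n)*t + /2)*(y^3*D 1%nat y)
      + (n-2)*(D 0%nat y*(D 0%nat y - 1)*(D 0%nat y - 2))).
  { unfold Fb, t. field. nra. }
  assert (hb1 : Rabs ((6-n)*t + /2) <= n + 1) by (apply Rabs_le; unfold n in *; nra).
  assert (hb4 : Rabs (n - 2) <= n) by (apply Rabs_le; unfold n in *; lra).
  assert (hFb := abs_add_le _ _ _ _ (abs_mul_le _ _ _ _ hb1 hP)
                  (abs_mul_le _ _ _ _ hb4 (cube_bound _ _ hG))).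
  rewrite <- hFbe in hFb.
  assert (hK : Rabs (y^(e-2) * exp(-(y*y)/4)) <= eps').
  { rewrite Rabs_right. lra. apply Rle_ge, Rmult_le_pos. apply pow_le; lra.
    apply Rlt_le, exp_pos. }
  assert (hall := abs_mul_le _ _ _ _ (abs_mul_le _ _ _ _ hK hP) hFb).
  unfold FF. fold n.
  rewrite (K_split e y) by (unfold e; lia).
  replace (y ^ (e - 2) * exp (- (y * y) / 4) * y ^ 3 * D 1%nat y * Fb D n y)
    with (y ^ (e - 2) * exp (- (y * y) / 4) * (y ^ 3 * D 1%nat y) * Fb D n y) by ring.
  eapply Rle_lt_trans; [exact hall|].
  fold M. unfold eps'.
  replace (eps / (C1 * M + 1) * C1 * M) with (eps * (C1*M / (C1*M+1))) by (field; nra).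
  assert (C1*M / (C1*M+1) < 1).
  { apply (Rmult_lt_reg_r (C1*M+1)). nra. unfold Rdiv. rewrite Rmult_assoc, Rinv_l; nra. }
  nra. }
assert (hzero : forall y, 0 < y -> FF D e y = 0).
{ intros y hy. apply Rle_antisym.
  - destruct (Rle_lt_dec (FF D e y) 0) as [h|h]; auto.
    destruct (hlarge (FF D e y) y h) as [z [hz hz']].
    assert (FF D e y <= FF D e z) by (apply hmono; lra).
    apply Rabs_def2 in hz'. lra.
  - destruct (Rle_lt_dec 0 (FF D e y)) as [h|h]; auto.
    destruct (hsmall (- FF D e y) y ltac:(lra) hy) as [z [hz hz']].
    assert (FF D e z <= FF D e y) by (apply hmono; lra).
    apply Rabs_def2 in hz'. lra. }
set (y0 := r0/2).
assert (hy0 : 0 < y0) by (unfold y0; lra).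
pose proof (proj1 (is_derive_Reals _ _ _) (hF y0 hy0)) as hdl.
destruct (hdl (Fp D e y0) hpos) as [delta hdel].
set (h := Rmin delta y0 / 2).
assert (hm : 0 < Rmin delta y0) by (apply Rmin_glb_lt; [apply cond_pos|lra]).
assert (hh : 0 < h) by (unfold h; lra).
assert (Rmin delta y0 <= delta) by apply Rmin_l.
specialize (hdel h ltac:(lra) ltac:(rewrite Rabs_right; unfold h; lra)).
rewrite (hzero (y0 + h)) in hdel by lra. rewrite (hzero y0) in hdel by lra.
replace ((0 - 0) / h - Fp D e y0) with (- Fp D e y0) in hdel by (field; lra).
unfold y0 in *. rewrite Rabs_Ropp, Rabs_right in hdel by lra. lra.
Qed.
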